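(* Let $f:\mathbb{S}^1\to\mathbb{S}^1$ be an orientation-preserving homeomorphism with irrational Poincaré rotation number whose non-wandering set $\mathrm{NW}(f)$ is homeomorphic to a Cantor set. Then $h_{\mathrm{pol}}(C(f))\ge 2$.
   Context: A point $p$ is wandering for $f$ if it has a neighbourhood $U$ with $f^n(U)\cap U=\emptyset$ for all $n\ge1$; $\mathrm{NW}(f)$ is the set of points that are not wandering. $C(\mathbb{S}^1)$ is the set of all nonempty closed connected subsets of $\mathbb{S}^1$ with the Hausdorff metric $d_H(A,B)=\inf\{\varepsilon>0: A\subset U(B,\varepsilon),\ B\subset U(A,\varepsilon)\}$, $U(A,\varepsilon)=\{x: d(x,A)<\varepsilon\}$; $C(f)(A)=f(A)$. For a continuous map $g:Z\to Z$ of a compact metric space $(Z,\rho)$, define $\rho^g_n(x,y)=\max_{0\le k\le n-1}\rho(g^k(x),g^k(y))$; a finite set $E\subset Z$ is $(n,\varepsilon)$-separated if $\rho^g_n(x,y)\ge\varepsilon$ for all distinct $x,y\in E$; $\mathrm{sep}(n,\varepsilon)$ is the maximal cardinality of such a set; and $h_{\mathrm{pol}}(g)=\lim_{\varepsilon\to0}\limsup_{n\to\infty}\frac{\log \mathrm{sep}(n,\varepsilon)}{\log n}$. *)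

(* Defs.v *)
From Stdlib Require Import Reals Lra List.
From Coquelicot Require Import Coquelicot.
Open Scope R_scope.

Definition S1 : Type := { x : R | 0 <= x < 1 }.

Lemma frac_part_in01 (x : R) : 0 <= frac_part x < 1.
Proof. destruct (base_fp x) as [H1 H2]; lra. Qed.

Definition proj (x : R) : S1 := exist _ (frac_part x) (frac_part_in01 x).

Definition dS (x y : S1) : R :=
  Rmin (Rabs (proj1_sig x - proj1_sig y)) (1 - Rabs (proj1_sig x - proj1_sig y)).

Definition S1_continuous (f : S1 -> S1) : Prop :=
  forall x eps, 0 < eps -> exists delta, 0 < delta /\
    forall y, dS x y < delta -> dS (f x) (f y) < eps.

Definition S1_homeomorphism (f : S1 -> S1) : Prop :=
  S1_continuous f /\
  exists g : S1 -> S1, S1_continuous g /\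
    (forall x, g (f x) = x) /\ (forall y, f (g y) = y).

Definition is_increasing_lift (f : S1 -> S1) (F : R -> R) : Prop :=
  continuity F /\
  (forall x y, x < y -> F x < F y) /\
  (forall x, F (x + 1) = F x + 1) /\
  (forall x, f (proj x) = proj (F x)).

Definition orientation_preserving_homeo (f : S1 -> S1) : Prop :=
  S1_homeomorphism f /\ exists F, is_increasing_lift f F.

Definition irrational (r : R) : Prop :=
  forall p q : Z, q <> 0%Z -> r <> IZR p / IZR q.

(* The Poincare rotation number of f is lim (F^n(x) - x)/n (mod 1) for a lift F;
   irrationality does not depend on the chosen lift. *)
Definition irrational_rotation_number (f : S1 -> S1) : Prop :=
  exists (F : R -> R) (rho : R),
    is_increasing_lift f F /\
    (forall x, Un_cv (fun n => (Nat.iter n F x - x) / INR n) rho) /\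
    irrational rho.

Definition ball (x : S1) (r : R) : S1 -> Prop := fun y => dS x y < r.

Definition wandering (f : S1 -> S1) (p : S1) : Prop :=
  exists U : S1 -> Prop,
    (exists r, 0 < r /\ forall y, ball p r y -> U y) /\
    forall n : nat, (1 <= n)%nat -> forall y, U y -> ~ U (Nat.iter n f y).

Definition NW (f : S1 -> S1) : S1 -> Prop := fun p => ~ wandering f p.

Definition agree_upto (N : nat) (a b : nat -> bool) : Prop :=
  forall i, (i < N)%nat -> a i = b i.

Definition homeomorphic_to_Cantor (A : S1 -> Prop) : Prop :=
  exists h : (nat -> bool) -> S1,
    (forall a, A (h a)) /\
    (forall x, A x -> exists a, h a = x) /\
    (forall a b, h a = h b -> a = b) /\
    (forall a eps, 0 < eps -> exists N, forall b, agree_upto N a b ->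
        dS (h a) (h b) < eps) /\
    (* h^{-1} : A -> {0,1}^N continuous *)
    (forall a N, exists delta, 0 < delta /\ forall b,
        dS (h a) (h b) < delta -> agree_upto N a b).

Definition S1_open (O : S1 -> Prop) : Prop :=
  forall x, O x -> exists r, 0 < r /\ forall y, ball x r y -> O y.

Definition S1_closed (A : S1 -> Prop) : Prop :=
  forall x, (forall r, 0 < r -> exists y, A y /\ dS x y < r) -> A x.

Definition S1_connected (A : S1 -> Prop) : Prop :=
  ~ exists U V : S1 -> Prop, S1_open U /\ S1_open V /\
      (forall x, A x -> U x \/ V x) /\
      (exists x, A x /\ U x) /\ (exists x, A x /\ V x) /\
      (forall x, A x -> U x -> V x -> False).

Definition in_CS1 (A : S1 -> Prop) : Prop :=
  (exists x, A x) /\ S1_closed A /\ S1_connected A.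

Definition nbhd (A : S1 -> Prop) (eps : R) : S1 -> Prop :=
  fun x => exists a, A a /\ dS x a < eps.

Definition subset (A B : S1 -> Prop) : Prop := forall x, A x -> B x.

Definition dH (A B : S1 -> Prop) : R :=
  real (Glb_Rbar (fun e => 0 < e /\ subset A (nbhd B e) /\ subset B (nbhd A e))).

Definition Cmap (f : S1 -> S1) (A : S1 -> Prop) : S1 -> Prop :=
  fun y => exists x, A x /\ f x = y.

Definition dyn_dist {Z : Type} (g : Z -> Z) (rho : Z -> Z -> R) (n : nat)
  (x y : Z) : R :=
  fold_right Rmax 0 (map (fun k => rho (Nat.iter k g x) (Nat.iter k g y)) (seq 0 n)).

Definition separated {Z : Type} (K : Z -> Prop) (g : Z -> Z) (rho : Z -> Z -> R)
  (n : nat) (eps : R) (E : list Z) : Prop :=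
  NoDup E /\ (forall x, In x E -> K x) /\
  forall x y, In x E -> In y E -> x <> y -> eps <= dyn_dist g rho n x y.

Definition sep {Z : Type} (K : Z -> Prop) (g : Z -> Z) (rho : Z -> Z -> R)
  (n : nat) (eps : R) : Rbar :=
  Lub_Rbar (fun r => exists E, separated K g rho n eps E /\ r = INR (length E)).

Definition hpol_eps {Z : Type} (K : Z -> Prop) (g : Z -> Z) (rho : Z -> Z -> R)
  (eps : R) : Rbar :=
  LimSup_seq (fun n => ln (real (sep K g rho n eps)) / ln (INR n)).

Definition Rbar_lim_right0 (phi : R -> Rbar) (h : Rbar) : Prop :=
  match h with
  | Finite l => forall e, 0 < e -> exists delta, 0 < delta /\
      forall eps, 0 < eps < delta ->
        Rbar_lt (l - e) (phi eps) /\ Rbar_lt (phi eps) (l + e)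
  | p_infty => forall M, exists delta, 0 < delta /\
      forall eps, 0 < eps < delta -> Rbar_lt M (phi eps)
  | m_infty => forall M, exists delta, 0 < delta /\
      forall eps, 0 < eps < delta -> Rbar_lt (phi eps) M
  end.

Definition is_hpol {Z : Type} (K : Z -> Prop) (g : Z -> Z) (rho : Z -> Z -> R)
  (h : Rbar) : Prop :=
  Rbar_lim_right0 (hpol_eps K g rho) h.

(* Main.v *)
Require Import Defs.
From Stdlib Require Import Reals.
From Coquelicot Require Import Coquelicot.
From Stdlib Require Import Lra Lia List ZArith Arith.
From Stdlib Require Import Classical ClassicalEpsilon ProofIrrelevance FunctionalExtensionality PropExtensionality.
Open Scope R_scope.

Lemma int_squeeze (m n : Z) (x : R) :
  IZR m <= x < IZR m + 1 -> IZR n <= x < IZR n + 1 -> m = n.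
Proof.
  intros [H1 H2] [H3 H4].
  assert (IZR m < IZR (n + 1)) by (rewrite plus_IZR; lra).
  assert (IZR n < IZR (m + 1)) by (rewrite plus_IZR; lra).
  apply lt_IZR in H. apply lt_IZR in H0. lia.
Qed.

Lemma frac_unique (x : R) (z : Z) :
  IZR z <= x < IZR z + 1 -> frac_part x = x - IZR z.
Proof.
  intros H. unfold frac_part.
  destruct (base_Int_part x) as [A B].
  replace (Int_part x) with z. reflexivity.
  apply (int_squeeze z (Int_part x) x); auto; lra.
Qed.

Lemma frac_shift (x : R) (k : Z) : frac_part (x + IZR k) = frac_part x.
Proof.
  destruct (base_Int_part x) as [A B].
  rewrite (frac_unique (x + IZR k) (Int_part x + k)).
  - unfold frac_part. rewrite plus_IZR. ring.
  - rewrite plus_IZR. lra.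
Qed.

Lemma frac_id (x : R) : 0 <= x < 1 -> frac_part x = x.
Proof. intros H. rewrite (frac_unique x 0); simpl; lra. Qed.

Lemma S1_eq (x y : S1) : proj1_sig x = proj1_sig y -> x = y.
Proof.
  destruct x as [x Hx], y as [y Hy]; simpl; intros ->.
  f_equal; apply proof_irrelevance.
Qed.

Lemma proj_shift (x : R) (k : Z) : proj (x + IZR k) = proj x.
Proof. apply S1_eq; simpl; apply frac_shift. Qed.

Lemma proj_plus1 (x : R) : proj (x + 1) = proj x.
Proof. apply (proj_shift x 1). Qed.

Lemma proj_sig (x : S1) : proj (proj1_sig x) = x.
Proof. apply S1_eq; simpl; apply frac_id; destruct x; auto. Qed.

Definition dR (x y : R) : R := dS (proj x) (proj y).

Lemma dS_sym x y : dS x y = dS y x.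
Proof. unfold dS. rewrite Rabs_minus_sym. reflexivity. Qed.

Lemma dS_refl x : dS x x = 0.
Proof. unfold dS. rewrite Rminus_diag, Rabs_R0. apply Rmin_left. lra. Qed.

Lemma dS_le_half x y : 0 <= dS x y <= 1/2.
Proof.
  unfold dS. destruct x as [x Hx], y as [y Hy]; simpl.
  assert (0 <= Rabs (x - y) < 1) by (split; [apply Rabs_pos| apply Rabs_def1; lra]).
  unfold Rmin; destruct Rle_dec; lra.
Qed.

Lemma dR_sym x y : dR x y = dR y x.
Proof. apply dS_sym. Qed.

Lemma dR_shiftl x y k : dR (x + IZR k) y = dR x y.
Proof. unfold dR. rewrite proj_shift. auto. Qed.
Lemma dR_shiftr x y k : dR x (y + IZR k) = dR x y.
Proof. unfold dR. rewrite proj_shift. auto. Qed.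

Lemma dR_val x y : 0 <= x - y < 1 -> dR x y = Rmin (x - y) (1 - (x - y)).
Proof.
  intros H. unfold dR, dS, proj; simpl. unfold frac_part.
  destruct (base_Int_part x) as [A B]. destruct (base_Int_part y) as [C D].
  set (m := Int_part x) in *. set (n := Int_part y) in *.
  assert (Hd : (m - n = 0)%Z \/ (m - n = 1)%Z).
  { assert (IZR (m - n) < 2) by (rewrite minus_IZR; lra).
    assert (-1 < IZR (m - n)) by (rewrite minus_IZR; lra).
    apply lt_IZR in H0. apply lt_IZR in H1. lia. }
  destruct Hd as [Hd|Hd].
  - assert (IZR m = IZR n) by (f_equal; lia). rewrite H0.
    replace (x - IZR n - (y - IZR n)) with (x - y) by ring.
    rewrite Rabs_pos_eq by lra. auto.
  - assert (IZR m = IZR n + 1) by (rewrite <- (plus_IZR n 1); f_equal; lia). rewrite H0.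
    replace (x - (IZR n + 1) - (y - IZR n)) with (x - y - 1) by ring.
    rewrite Rabs_left by lra.
    rewrite Rmin_comm. f_equal; ring.
Qed.

Lemma dR_lb d x y : d <= x - y <= 1 - d -> d <= dR x y /\ d <= dR y x.
Proof.
  intros H. rewrite (dR_sym y x).
  destruct (Rle_lt_dec 1 (x - y)).
  - assert (d <= 0) by lra. pose proof (dS_le_half (proj x) (proj y)). unfold dR; lra.
  - destruct (Rlt_le_dec (x - y) 0).
    + assert (d <= 0) by lra. pose proof (dS_le_half (proj x) (proj y)). unfold dR; lra.
    + rewrite dR_val by lra. split; apply Rmin_glb; lra.
Qed.

Lemma dR_le x y : dR x y <= Rabs (x - y).
Proof.
  destruct (Rle_lt_dec 1 (Rabs (x - y))).
  - pose proof (dS_le_half (proj x) (proj y)). unfold dR; lra.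
  - destruct (Rle_lt_dec 0 (x - y)).
    + rewrite dR_val by (rewrite Rabs_pos_eq in r; lra). rewrite Rabs_pos_eq by lra. apply Rmin_l.
    + rewrite dR_sym. rewrite dR_val by (rewrite Rabs_left in r; lra).
      rewrite Rabs_left by lra. replace (- (x - y)) with (y - x) by ring. apply Rmin_l.
Qed.

Lemma dR_eq0 x y : proj x = proj y -> dR x y = 0.
Proof. intros H. unfold dR. rewrite H. apply dS_refl. Qed.

Lemma shift_exists (w a : R) : exists k : Z, a <= w + IZR k < a + 1.
Proof.
  exists (- Int_part (w - a))%Z. rewrite opp_IZR.
  destruct (base_Int_part (w - a)). lra.
Qed.


Lemma dR_m1r x y : dR x (y - 1) = dR x y.
Proof. rewrite <- (dR_shiftr x (y - 1) 1). f_equal. simpl. ring. Qed.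
Lemma dR_m1l x y : dR (x - 1) y = dR x y.
Proof. rewrite <- (dR_shiftl (x - 1) y 1). f_equal. simpl. ring. Qed.

Definition W (a b c d dl : R) : Prop :=
  exists z, (a <= z <= b /\ forall s, c <= s <= d -> dl <= dR z s) \/
            (c <= z <= d /\ forall s, a <= s <= b -> dl <= dR z s).

Lemma core_left a b c d r : 0 < r ->
  a <= b < a + 1 -> c <= d < c + 1 ->
  r <= dR b a -> r <= dR c a -> (r <= dR d a \/ proj d = proj a) ->
  W a b c d (r/2).
Proof.
  intros Hr Hab Hcd Hb Hc Hd.
  assert (Hb' : r <= b - a <= 1 - r).
  { rewrite dR_val in Hb by lra. unfold Rmin in Hb; destruct Rle_dec in Hb; lra. }
  destruct (shift_exists c a) as [k Hk].
  assert (Hc' : r <= c + IZR k - a <= 1 - r).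
  { rewrite <- (dR_shiftl c a k) in Hc. rewrite dR_val in Hc by lra.
    unfold Rmin in Hc; destruct Rle_dec in Hc; lra. }
  destruct (Rle_lt_dec (d + IZR k) (a + 1 - r)).
  - exists a. left. split; [lra|]. intros s Hs.
    rewrite <- (dR_shiftr a s k).
    destruct (dR_lb r (s + IZR k) a); lra.
  - assert (Hd1 : a + 1 <= d + IZR k).
    { destruct (Rlt_le_dec (d + IZR k) (a + 1)); [|lra]. exfalso.
      assert (E : dR d a = 1 - (d + IZR k - a)).
      { rewrite <- (dR_shiftl d a k). rewrite dR_val by lra.
        unfold Rmin; destruct Rle_dec; lra. }
      destruct Hd as [Hd|Hd].
      - lra.
      - rewrite (dR_eq0 _ _ Hd) in E. lra. }
    exists (a + 1 - r/2 - IZR k). right. split; [lra|].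
    intros s Hs.
    rewrite <- (dR_shiftl (a + 1 - r / 2 - IZR k) s k).
    destruct (dR_lb (r/2) (a + 1 - r / 2 - IZR k + IZR k) s); lra.
Qed.

Lemma core_right a b c d r : 0 < r ->
  a <= b < a + 1 -> c <= d < c + 1 ->
  r <= dR a b -> r <= dR d b -> (r <= dR c b \/ proj c = proj b) ->
  W a b c d (r/2).
Proof.
  intros Hr Hab Hcd Hb Hd Hc.
  assert (Hb' : r <= b - a <= 1 - r).
  { rewrite dR_sym in Hb. rewrite dR_val in Hb by lra. unfold Rmin in Hb; destruct Rle_dec in Hb; lra. }
  destruct (shift_exists d (b - 1)) as [k Hk].
  assert (Hd' : r <= d + IZR k - (b - 1) <= 1 - r).
  { rewrite <- (dR_shiftl d b k) in Hd.
    rewrite <- dR_m1r in Hd.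
    rewrite dR_val in Hd by lra.
    unfold Rmin in Hd; destruct Rle_dec in Hd; lra. }
  destruct (Rle_lt_dec (b - 1 + r) (c + IZR k)).
  - exists b. left. split; [lra|]. intros s Hs.
    rewrite <- (dR_shiftr b s k).
    rewrite <- dR_m1l.
    destruct (dR_lb r (s + IZR k) (b - 1)); lra.
  - assert (Hc1 : c + IZR k <= b - 1).
    { destruct (Rle_lt_dec (c + IZR k) (b - 1)); [lra|]. exfalso.
      assert (E : dR c b = c + IZR k - (b - 1)).
      { rewrite <- (dR_shiftl c b k).
        rewrite <- dR_m1r.
        rewrite dR_val by lra.
        unfold Rmin; destruct Rle_dec; lra. }
      destruct Hc as [Hc|Hc].
      - lra.
      - rewrite (dR_eq0 _ _ Hc) in E. lra. }
    exists (b - 1 + r/2 - IZR k). right. split; [lra|].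
    intros s Hs.
    rewrite <- (dR_shiftl (b - 1 + r / 2 - IZR k) s k).
    destruct (dR_lb (r/2) s (b - 1 + r / 2 - IZR k + IZR k)); lra.
Qed.


Definition Arc (a b : R) : S1 -> Prop := fun z => exists s, a <= s <= b /\ proj s = z.

Lemma Arc_closed a b : a <= b < a + 1 -> S1_closed (Arc a b).
Proof.
  intros Hab x Hx.
  destruct (classic (Arc a b x)) as [H|H]; [exact H|exfalso].
  destruct (shift_exists (proj1_sig x) a) as [k Hk].
  set (X := proj1_sig x + IZR k) in *.
  assert (HX : proj X = x) by (unfold X; rewrite proj_shift; apply proj_sig).
  assert (HXb : b < X).
  { destruct (Rle_lt_dec X b); auto. exfalso; apply H. exists X; split; auto; lra. }
  set (de := Rmin (X - b) (a + 1 - X)).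
  assert (Hde : 0 < de) by (unfold de; apply Rmin_glb_lt; lra).
  destruct (Hx de Hde) as [y [[s [Hs Hsy]] Hy]].
  rewrite <- HX, <- Hsy in Hy. fold (dR X s) in Hy.
  destruct (dR_lb de X s) as [H1 _].
  - unfold de. split.
    + apply Rle_trans with (X - b); [apply Rmin_l|lra].
    + assert (Rmin (X - b) (a + 1 - X) <= a + 1 - X) by apply Rmin_r. lra.
  - lra.
Qed.

Definition clamp (a b t : R) : R := Rmax a (Rmin b t).

Lemma clamp_in a b t : a <= b -> a <= clamp a b t <= b.
Proof. intros H. unfold clamp, Rmax, Rmin. repeat destruct Rle_dec; lra. Qed.

Lemma clamp_lip a b t u : a <= b -> Rabs (clamp a b t - clamp a b u) <= Rabs (t - u).
Proof.
  intros H. unfold clamp, Rmax, Rmin.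
  repeat destruct Rle_dec; unfold Rabs; repeat destruct Rcase_abs; lra.
Qed.

Lemma Arc_connected a b : a <= b -> S1_connected (Arc a b).
Proof.
  intros Hab [U [V [HU [HV [Hcov [[xu [Axu Uxu]] [[xv [Axv Vxv]] Hdis]]]]]]].
  set (chi := fun t => if excluded_middle_informative (U (proj (clamp a b t))) then 1 else 0).
  assert (Hcont : continuity chi).
  { intros t eps Heps.
    set (c := clamp a b t).
    assert (Ac : Arc a b (proj c)) by (exists c; split; auto; apply clamp_in; auto).
    destruct (Hcov _ Ac) as [Hu|Hv].
    - destruct (HU _ Hu) as [rho [Hrho Hball]].
      exists rho. split; auto. intros t' [_ Ht'].
      unfold R_dist in *. simpl in *. unfold chi.
      assert (U (proj (clamp a b t'))).
      { apply Hball. unfold ball. fold c. change (dR c (clamp a b t') < rho).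
        rewrite dR_sym. eapply Rle_lt_trans; [apply dR_le|].
        eapply Rle_lt_trans; [apply clamp_lip; auto| exact Ht']. }
      fold c. do 2 destruct excluded_middle_informative; try tauto.
      all: try (unfold R_dist; rewrite Rminus_diag, Rabs_R0; auto); idtac.
    - destruct (HV _ Hv) as [rho [Hrho Hball]].
      exists rho. split; auto. intros t' [_ Ht'].
      unfold R_dist in *. simpl in *. unfold chi.
      assert (V (proj (clamp a b t'))).
      { apply Hball. unfold ball. fold c. change (dR c (clamp a b t') < rho).
        rewrite dR_sym. eapply Rle_lt_trans; [apply dR_le|].
        eapply Rle_lt_trans; [apply clamp_lip; auto| exact Ht']. }
      assert (A' : Arc a b (proj (clamp a b t'))) by (exists (clamp a b t'); split; auto; apply clamp_in; auto).
      fold c. do 2 destruct excluded_middle_informative.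
      all: try (exfalso; eapply Hdis; eauto; fail).
      all: unfold R_dist; try (rewrite Rminus_diag, Rabs_R0; auto; fail). exfalso; apply (Hdis (proj c)); auto. }
  destruct Axu as [su [Hsu <-]]. destruct Axv as [sv [Hsv <-]].
  assert (Cu : chi su = 1).
  { unfold chi. unfold clamp. replace (Rmax a (Rmin b su)) with su.
    - destruct excluded_middle_informative; tauto.
    - unfold Rmax, Rmin; repeat destruct Rle_dec; lra. }
  assert (Cv : chi sv = 0).
  { unfold chi. unfold clamp. replace (Rmax a (Rmin b sv)) with sv.
    - destruct excluded_middle_informative; auto.
      exfalso. eapply Hdis; [|eauto|eauto]. exists sv; split; auto.
    - unfold Rmax, Rmin; repeat destruct Rle_dec; lra. }
  destruct (IVT_gen chi su sv (1/2) Hcont) as [t [_ Ht]].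
  - rewrite Cu, Cv. unfold Rmin, Rmax; destruct Rle_dec; lra.
  - unfold chi in Ht. destruct excluded_middle_informative; lra.
Qed.

Lemma Arc_in a b : a <= b < a + 1 -> in_CS1 (Arc a b).
Proof.
  intros H. split; [|split].
  - exists (proj a). exists a. split; auto. lra.
  - apply Arc_closed; auto.
  - apply Arc_connected; lra.
Qed.


Lemma iter_Cmap (f : S1 -> S1) k A y :
  Nat.iter k (Cmap f) A y <-> exists x, A x /\ Nat.iter k f x = y.
Proof.
  revert y; induction k; intros y; simpl.
  - split; [intros H; exists y; auto | intros [x [H <-]]; auto].
  - split.
    + intros [x' [Hx' <-]]. apply IHk in Hx'. destruct Hx' as [x [Hx <-]]. exists x; auto.
    + intros [x [Hx <-]]. exists (Nat.iter k f x). split; auto. apply IHk. exists x; auto.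
Qed.

Section Lift.
Variable f : S1 -> S1.
Variable F : R -> R.
Hypothesis HF : is_increasing_lift f F.

Lemma iterF_mono k x y : x < y -> Nat.iter k F x < Nat.iter k F y.
Proof.
  destruct HF as [_ [Hm _]]. induction k; simpl; auto.
Qed.

Lemma iterF_monole k x y : x <= y -> Nat.iter k F x <= Nat.iter k F y.
Proof.
  intros [H|H]; [left; apply iterF_mono; auto| subst; lra].
Qed.

Lemma iterF_plus1 k x : Nat.iter k F (x + 1) = Nat.iter k F x + 1.
Proof.
  destruct HF as [_ [_ [Hp _]]]. induction k; simpl; auto.
  rewrite IHk. apply Hp.
Qed.

Lemma iterF_cont k : continuity (Nat.iter k F).
Proof.
  destruct HF as [Hc _]. induction k.
  - simpl. intros x; apply derivable_continuous_pt; apply derivable_pt_id.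
  - intros x. apply (continuity_comp (Nat.iter k F) F); auto.
Qed.

Lemma proj_iter k x : proj (Nat.iter k F x) = Nat.iter k f (proj x).
Proof.
  destruct HF as [_ [_ [_ Hl]]]. induction k; simpl; auto.
  rewrite <- IHk. symmetry. apply Hl.
Qed.

Lemma image_Arc k a b z : a <= b ->
  (Nat.iter k (Cmap f) (Arc a b) z <-> Arc (Nat.iter k F a) (Nat.iter k F b) z).
Proof.
  intros Hab. rewrite iter_Cmap. split.
  - intros [x [[s [Hs <-]] <-]]. exists (Nat.iter k F s). split.
    + split; apply iterF_monole; lra.
    + apply proj_iter.
  - intros [t [Ht <-]].
    destruct (IVT_gen (Nat.iter k F) a b t (iterF_cont k)) as [s [Hs Hst]].
    + rewrite Rmin_left, Rmax_right by (apply iterF_monole; auto). auto.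
    + rewrite Rmin_left in Hs by auto. rewrite Rmax_right in Hs by auto.
      exists (proj s). split; [exists s; auto|].
      rewrite <- proj_iter. rewrite Hst. auto.
Qed.

End Lift.


Definition HE (X Y : S1 -> Prop) : R -> Prop :=
  fun e => 0 < e /\ subset X (nbhd Y e) /\ subset Y (nbhd X e).

Lemma glb_bounds (E : R -> Prop) (lo e0 : R) :
  E e0 -> (forall e, E e -> lo <= e) ->
  lo <= real (Glb_Rbar E) <= e0.
Proof.
  intros H0 Hlo. destruct (Glb_Rbar_correct E) as [Hlb Hgl].
  assert (A : Rbar_le (Glb_Rbar E) e0) by (apply Hlb; auto).
  assert (B : Rbar_le lo (Glb_Rbar E)) by (apply Hgl; intros x Hx; simpl; apply Hlo; auto).
  destruct (Glb_Rbar E); simpl in *; try contradiction; split; auto.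
Qed.

Lemma dH_le (X Y : S1 -> Prop) e : 0 < e ->
  subset X (nbhd Y e) -> subset Y (nbhd X e) -> dH X Y <= e.
Proof.
  intros He H1 H2. unfold dH.
  apply (glb_bounds (fun e => 0 < e /\ subset X (nbhd Y e) /\ subset Y (nbhd X e)) 0 e).
  - auto.
  - intros e' [? _]; lra.
Qed.

Lemma dH_ge_l (X Y : S1 -> Prop) (dl : R) (z : S1) :
  (exists x, X x) -> (exists y, Y y) ->
  X z -> (forall y, Y y -> dl <= dS z y) -> dl <= dH X Y.
Proof.
  intros [x0 Hx0] [y0 Hy0] Hz Hfar. unfold dH.
  apply (glb_bounds (fun e => 0 < e /\ subset X (nbhd Y e) /\ subset Y (nbhd X e)) dl 1).
  - split; [lra|split].
    + intros x _. exists y0. split; auto. pose proof (dS_le_half x y0); lra.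
    + intros y _. exists x0. split; auto. pose proof (dS_le_half y x0); lra.
  - intros e [_ [H1 _]]. destruct (H1 z Hz) as [y [Hy Hd]]. specialize (Hfar y Hy). lra.
Qed.

Lemma dH_ge_r (X Y : S1 -> Prop) (dl : R) (z : S1) :
  (exists x, X x) -> (exists y, Y y) ->
  Y z -> (forall x, X x -> dl <= dS z x) -> dl <= dH X Y.
Proof.
  intros [x0 Hx0] [y0 Hy0] Hz Hfar. unfold dH.
  apply (glb_bounds (fun e => 0 < e /\ subset X (nbhd Y e) /\ subset Y (nbhd X e)) dl 1).
  - split; [lra|split].
    + intros x _. exists y0. split; auto. pose proof (dS_le_half x y0); lra.
    + intros y _. exists x0. split; auto. pose proof (dS_le_half y x0); lra.
  - intros e [_ [_ H1]]. destruct (H1 z Hz) as [y [Hy Hd]]. specialize (Hfar y Hy). lra.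
Qed.

Lemma fold_ge (l : list R) a : In a l -> a <= fold_right Rmax 0 l.
Proof.
  induction l; simpl; [tauto|]. intros [<-|H].
  - apply Rmax_l.
  - eapply Rle_trans; [apply IHl; auto| apply Rmax_r].
Qed.

Lemma fold_lt (l : list R) e : 0 < e -> (forall a, In a l -> a < e) -> fold_right Rmax 0 l < e.
Proof.
  intros He; induction l; simpl; auto. intros H.
  apply Rmax_lub_lt; auto.
Qed.

Lemma dyn_ge {Z : Type} (g : Z -> Z) rho n x y k : (k < n)%nat ->
  rho (Nat.iter k g x) (Nat.iter k g y) <= dyn_dist g rho n x y.
Proof.
  intros Hk. unfold dyn_dist. apply fold_ge. apply in_map_iff.
  exists k. split; auto. apply in_seq. lia.
Qed.

Lemma dyn_lt {Z : Type} (g : Z -> Z) rho n x y e : 0 < e ->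
  (forall k, (k < n)%nat -> rho (Nat.iter k g x) (Nat.iter k g y) < e) ->
  dyn_dist g rho n x y < e.
Proof.
  intros He H. unfold dyn_dist. apply fold_lt; auto.
  intros a Ha. apply in_map_iff in Ha. destruct Ha as [k [<- Hk]].
  apply in_seq in Hk. apply H. lia.
Qed.

Fixpoint all_tuples {T : Type} (l : list T) (n : nat) : list (list T) :=
  match n with
  | O => nil :: nil
  | S n => flat_map (fun x => map (cons x) (all_tuples l n)) l
  end.

Lemma all_tuples_in {T : Type} (l : list T) (t : list T) :
  (forall e, In e t -> In e l) -> In t (all_tuples l (length t)).
Proof.
  induction t; simpl; intros H; auto.
  apply in_flat_map. exists a. split; auto. apply in_map. auto.
Qed.

Definition cellb (M : nat) (X : S1 -> Prop) (m : nat) : bool :=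
  if excluded_middle_informative
       (exists x, X x /\ INR m <= proj1_sig x * INR M < INR m + 1) then true else false.

Lemma cell_exists (M : nat) (x : S1) : (0 < M)%nat ->
  exists m, (m < M)%nat /\ INR m <= proj1_sig x * INR M < INR m + 1.
Proof.
  intros HM. destruct x as [x Hx]; simpl.
  assert (0 <= x * INR M) by (apply Rmult_le_pos; [lra| apply pos_INR]).
  destruct (nfloor_ex (x * INR M) H) as [m Hm].
  exists m. split; auto.
  assert (INR m < INR M).
  { assert (x * INR M < 1 * INR M) by (apply Rmult_lt_compat_r; [apply lt_0_INR; lia| lra]). lra. }
  apply INR_lt; auto.
Qed.

Lemma same_cell_close (M : nat) (x y : S1) m : (0 < M)%nat ->
  INR m <= proj1_sig x * INR M < INR m + 1 ->
  INR m <= proj1_sig y * INR M < INR m + 1 -> dS x y < / INR M.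
Proof.
  intros HM Hx Hy.
  assert (HMp : 0 < INR M) by (apply lt_0_INR; lia).
  assert (Rabs (proj1_sig x - proj1_sig y) * INR M < 1).
  { rewrite <- (Rabs_pos_eq (INR M)) by lra. rewrite <- Rabs_mult.
    apply Rabs_def1; lra. }
  unfold dS. eapply Rle_lt_trans; [apply Rmin_l|].
  apply (Rmult_lt_reg_r (INR M)); auto. rewrite Rinv_l; lra.
Qed.

Lemma cells_close (M : nat) (X Y : S1 -> Prop) : (0 < M)%nat ->
  (forall m, (m < M)%nat -> cellb M X m = cellb M Y m) -> dH X Y <= / INR M.
Proof.
  intros HM H.
  assert (HMp : 0 < INR M) by (apply lt_0_INR; lia).
  apply dH_le; [apply Rinv_0_lt_compat; auto| |].
  - intros x Hx. destruct (cell_exists M x HM) as [m [Hm Hc]].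
    specialize (H m Hm). unfold cellb in H.
    destruct excluded_middle_informative as [_|n]; [|exfalso; apply n; exists x; auto].
    destruct excluded_middle_informative as [[y [Hy Hcy]]|]; [|discriminate].
    exists y. split; auto. eapply same_cell_close; eauto.
  - intros y Hy. destruct (cell_exists M y HM) as [m [Hm Hc]].
    specialize (H m Hm). unfold cellb in H.
    destruct excluded_middle_informative as [_|n] in H at 2; [|exfalso; apply n; exists y; auto].
    destruct excluded_middle_informative as [[x [Hx Hcx]]|]; [|discriminate].
    exists x. split; auto. eapply same_cell_close; eauto.
Qed.


Lemma map_eq_in {A B : Type} (f g : A -> B) (l : list A) :
  map f l = map g l -> forall x, In x l -> f x = g x.
Proof.
  induction l; simpl; [tauto|]. intros H x [<-|Hx]; inversion H; auto.
Qed.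

Lemma sep_fin (K : (S1 -> Prop) -> Prop) (g : (S1 -> Prop) -> (S1 -> Prop)) n eps :
  0 < eps -> (exists x0, K x0) ->
  exists s, sep K g dH n eps = Finite s /\ 1 <= s /\
    (forall E, separated K g dH n eps E -> INR (length E) <= s).
Proof.
  intros He [x0 Hx0].
  assert (Hie : 0 <= / eps) by (left; apply Rinv_0_lt_compat; auto).
  destruct (nfloor_ex (/ eps) Hie) as [m0 Hm0].
  set (M := S m0).
  assert (HM : (0 < M)%nat) by (unfold M; lia).
  assert (HMe : / INR M < eps).
  { unfold M. rewrite S_INR. rewrite <- (Rinv_inv eps).
    apply Rinv_lt_contravar; [apply Rmult_lt_0_compat; [apply Rinv_0_lt_compat; auto| pose proof (pos_INR m0); lra]| lra]. }
  set (code := fun A => map (fun k => map (fun m => cellb M (Nat.iter k g A) m) (seq 0 M)) (seq 0 n)).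
  set (bnd := INR (length (all_tuples (all_tuples (true :: false :: nil) M) n))).
  assert (Hbnd : forall E, separated K g dH n eps E -> INR (length E) <= bnd).
  { intros E [HND [HK Hsep]]. unfold bnd. apply le_INR.
    rewrite <- (length_map code E). apply NoDup_incl_length.
    - apply NoDup_map_NoDup_ForallPairs; auto.
      intros a b Ha Hb Hab. apply NNPP. intros Hne.
      specialize (Hsep a b Ha Hb Hne).
      assert (dyn_dist g dH n a b < eps).
      { apply dyn_lt; auto. intros k Hk.
        eapply Rle_lt_trans; [|exact HMe]. apply cells_close; auto.
        intros m Hm.
        assert (Hk' : In k (seq 0 n)) by (apply in_seq; lia).
        pose proof (map_eq_in _ _ _ Hab k Hk') as Hrow. cbv beta in Hrow.
        assert (Hm' : In m (seq 0 M)) by (apply in_seq; lia).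
        exact (map_eq_in _ _ _ Hrow m Hm'). }
      lra.
    - intros c Hc. apply in_map_iff in Hc. destruct Hc as [A [<- _]].
      assert (Hlen : length (code A) = n) by (unfold code; rewrite length_map, length_seq; auto).
      assert (Hel : forall e, In e (code A) -> In e (all_tuples (true :: false :: nil) M)).
      { intros row Hrow. unfold code in Hrow.
        apply in_map_iff in Hrow. destruct Hrow as [k [<- _]].
        set (row := map (fun m : nat => cellb M (Nat.iter k g A) m) (seq 0 M)).
        assert (Hl2 : length row = M) by (unfold row; rewrite length_map, length_seq; auto).
        assert (HH : In row (all_tuples (true :: false :: nil) (length row))).
        { apply all_tuples_in. intros bb _. destruct bb; simpl; auto. }
        rewrite Hl2 in HH; exact HH. }
      pose proof (all_tuples_in _ (code A) Hel) as HH. rewrite Hlen in HH; exact HH. }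
  assert (Hone : separated K g dH n eps (x0 :: nil)).
  { split; [|split].
    - constructor; [simpl; tauto| constructor].
    - intros x [<-|[]]; auto.
    - intros x y [<-|[]] [<-|[]] H; tauto. }
  destruct (Lub_Rbar_correct (fun r => exists E, separated K g dH n eps E /\ r = INR (length E)))
    as [Hub Hleast].
  assert (A1 : Rbar_le 1 (sep K g dH n eps)).
  { apply Hub. exists (x0 :: nil). split; auto. }
  assert (A2 : Rbar_le (sep K g dH n eps) bnd).
  { apply Hleast. intros r [E [HE ->]]. simpl. apply Hbnd; auto. }
  unfold sep in *. destruct (Lub_Rbar _) as [s| |]; simpl in *; try contradiction.
  exists s. split; auto. split; auto.
  intros E HE. assert (Rbar_le (INR (length E)) s) by (apply Hub; exists E; auto). auto.
Qed.

Lemma sep_ge (K : (S1 -> Prop) -> Prop) g n eps E :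
  0 < eps -> (exists x0, K x0) -> separated K g dH n eps E ->
  INR (length E) <= real (sep K g dH n eps).
Proof.
  intros He HK HE. destruct (sep_fin K g n eps He HK) as [s [Hs [_ Hb]]].
  rewrite Hs. simpl. apply Hb; auto.
Qed.

Lemma sep_pos (K : (S1 -> Prop) -> Prop) g n eps :
  0 < eps -> (exists x0, K x0) -> 1 <= real (sep K g dH n eps).
Proof.
  intros He HK. destruct (sep_fin K g n eps He HK) as [s [Hs [H1 _]]].
  rewrite Hs; auto.
Qed.

Lemma sep_mono (K : (S1 -> Prop) -> Prop) g n e1 e2 :
  0 < e1 <= e2 -> (exists x0, K x0) ->
  real (sep K g dH n e2) <= real (sep K g dH n e1).
Proof.
  intros He HK.
  destruct (sep_fin K g n e1 ltac:(lra) HK) as [s1 [Hs1 [_ Hb1]]].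
  destruct (sep_fin K g n e2 ltac:(lra) HK) as [s2 [Hs2 [_ Hb2]]].
  rewrite Hs1.
  destruct (Lub_Rbar_correct (fun r => exists E, separated K g dH n e2 E /\ r = INR (length E)))
    as [_ Hleast].
  assert (Rbar_le (sep K g dH n e2) s1).
  { apply Hleast. intros r [E [[HND [HKE Hsep]] ->]]. simpl. apply Hb1.
    split; [auto|split; auto]. intros x y Hx Hy Hxy. specialize (Hsep x y Hx Hy Hxy). lra. }
  rewrite Hs2 in *. simpl in *. auto.
Qed.

Lemma hpol_mono (K : (S1 -> Prop) -> Prop) g e1 e2 :
  0 < e1 <= e2 -> (exists x0, K x0) ->
  Rbar_le (hpol_eps K g dH e2) (hpol_eps K g dH e1).
Proof.
  intros He HK. unfold hpol_eps. apply LimSup_le. exists 1%nat. intros n Hn.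
  unfold Rdiv. apply Rmult_le_compat_r.
  - assert (0 <= ln (INR n)).
    { rewrite <- ln_1. apply ln_le; [lra|]. apply (le_INR 1); auto. }
    destruct H as [H|H]; [left; apply Rinv_0_lt_compat; auto| rewrite <- H, Rinv_0; lra].
  - apply ln_le.
    + pose proof (sep_pos K g n e2 ltac:(lra) HK). lra.
    + apply sep_mono; auto.
Qed.


Lemma small_inv (eps : R) : 0 < eps -> exists m : nat, / INR (S m) <= eps.
Proof.
  intros He. assert (Hie : 0 <= / eps) by (left; apply Rinv_0_lt_compat; auto).
  destruct (nfloor_ex (/ eps) Hie) as [m0 Hm0]. exists m0.
  rewrite S_INR. rewrite <- (Rinv_inv eps). left.
  apply Rinv_lt_contravar; [apply Rmult_lt_0_compat; [apply Rinv_0_lt_compat; auto| pose proof (pos_INR m0); lra]| lra].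
Qed.

Lemma inv_S_pos m : 0 < / INR (S m).
Proof. apply Rinv_0_lt_compat. apply lt_0_INR. lia. Qed.

Lemma limsup_ge2 (v : nat -> R) :
  (forall e, 0 < e -> forall N, exists n, (N <= n)%nat /\ 2 - e <= v n) ->
  Rbar_le 2 (LimSup_seq v).
Proof.
  intros H. destruct (ex_LimSup_seq v) as [lv L].
  rewrite (is_LimSup_seq_unique v lv L).
  destruct lv as [l| |]; simpl in *; auto.
  - destruct (Rle_lt_dec 2 l) as [Hl|Hl]; auto. exfalso.
    assert (Hp : 0 < (2 - l) / 2) by lra.
    destruct (L (mkposreal _ Hp)) as [_ [N HN]]. simpl in HN.
    destruct (H ((2 - l)/2) Hp N) as [n [Hn Hv]].
    specialize (HN n Hn). lra.
  - destruct (L 0) as [N HN]. destruct (H 1 ltac:(lra) N) as [n [Hn Hv]].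
    specialize (HN n Hn). lra.
Qed.

Lemma ln_bound (e : R) (N0 : nat) : 0 < e ->
  exists N : nat, (N0 <= N)%nat /\ (1 <= N)%nat /\ 2 * ln 2 / e <= ln (INR N).
Proof.
  intros He. set (K := 2 * ln 2 / e).
  assert (Hx : 0 <= exp K) by (left; apply exp_pos).
  destruct (nfloor_ex (exp K) Hx) as [m Hm].
  exists (Nat.max N0 (S m)). split; [lia|split; [lia|]].
  rewrite <- (ln_exp K) at 1. apply ln_le; [apply exp_pos|].
  apply Rle_trans with (INR (S m)); [rewrite S_INR; lra| apply le_INR; lia].
Qed.

Lemma ratio_bound (e s : R) (N : nat) : 0 < e -> (1 <= N)%nat ->
  2 * ln 2 / e <= ln (INR N) -> INR (N * N) <= s ->
  2 - e <= ln s / ln (INR (2 * N)).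
Proof.
  intros He HN HK Hs.
  assert (HNp : 1 <= INR N) by (apply (le_INR 1); auto).
  assert (Hl2 : 0 < ln 2) by (pose proof ln_lt_2; lra).
  assert (HlN : 0 <= ln (INR N)) by (rewrite <- ln_1; apply ln_le; lra).
  rewrite mult_INR in Hs. rewrite mult_INR. simpl (INR 2).
  assert (Hsl : 2 * ln (INR N) <= ln s).
  { replace (2 * ln (INR N)) with (ln (INR N * INR N)) by (rewrite ln_mult; lra).
    apply ln_le; [nra| auto]. }
  rewrite ln_mult by lra.
  assert (D : 0 < ln 2 + ln (INR N)) by lra.
  assert (Hk : 2 * ln 2 <= e * ln (INR N)).
  { unfold Rdiv in HK. apply (Rmult_le_compat_l e) in HK; [|lra].
    rewrite <- Rmult_assoc, (Rmult_comm e), Rmult_assoc, Rinv_r, Rmult_1_r in HK; lra. }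
  apply (Rmult_le_reg_r (ln 2 + ln (INR N))); auto.
  unfold Rdiv. rewrite Rmult_assoc, Rinv_l, Rmult_1_r by lra.
  nra.
Qed.


Lemma Arc01_all (x : S1) : Arc 0 1 x.
Proof. exists (proj1_sig x). split; [destruct x; simpl; lra|apply proj_sig]. Qed.

Lemma exists_wandering (f : S1 -> S1) :
  homeomorphic_to_Cantor (NW f) -> exists p, wandering f p.
Proof.
  intros [h [Hin [Hsurj [Hinj [_ Hinv]]]]].
  apply NNPP. intros Hn.
  assert (All : forall x, NW f x) by (intros x Hw; apply Hn; exists x; auto).
  apply (Arc_connected 0 1 ltac:(lra)).
  exists (fun x => exists a, h a = x /\ a 0%nat = true).
  exists (fun x => exists a, h a = x /\ a 0%nat = false).
  split; [|split; [|split; [|split; [|split]]]].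
  - intros x [a [<- Ha]]. destruct (Hinv a 1%nat) as [de [Hde Hb]].
    exists de. split; auto. intros y Hy. destruct (Hsurj y (All y)) as [b <-].
    exists b. split; auto. rewrite <- (Hb b Hy 0%nat ltac:(lia)). auto.
  - intros x [a [<- Ha]]. destruct (Hinv a 1%nat) as [de [Hde Hb]].
    exists de. split; auto. intros y Hy. destruct (Hsurj y (All y)) as [b <-].
    exists b. split; auto. rewrite <- (Hb b Hy 0%nat ltac:(lia)). auto.
  - intros x _. destruct (Hsurj x (All x)) as [a <-].
    destruct (a 0%nat) eqn:E; [left|right]; exists a; auto.
  - exists (h (fun _ => true)). split; [apply Arc01_all| eexists; split; eauto].
  - exists (h (fun _ => false)). split; [apply Arc01_all| eexists; split; eauto].
  - intros x _ [a [<- Ha]] [b [Hb Hb0]]. apply Hinj in Hb. subst. congruence.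
Qed.

Section Main.
Variable f g : S1 -> S1.
Hypothesis Hfg : forall y, f (g y) = y.
Variable F : R -> R.
Hypothesis HF : is_increasing_lift f F.
Variable p : S1.
Variable r : R.
Hypothesis Hr : 0 < r.
Hypothesis Hwand : forall n y, (1 <= n)%nat -> dS p y < r -> ~ dS p (Nat.iter n f y) < r.

Lemma fg_iter i y : Nat.iter i f (Nat.iter i g y) = y.
Proof.
  revert y; induction i; intros y; simpl; auto.
  change (Nat.iter (S i) f (g (Nat.iter i g y)) = y). rewrite Nat.iter_succ_r, Hfg. apply IHi.
Qed.

Lemma fg_le i j : (i <= j)%nat -> Nat.iter i f (Nat.iter j g p) = Nat.iter (j - i) g p.
Proof.
  intros H. destruct (Nat.le_exists_sub i j H) as [m [-> _]].
  replace (m + i - i)%nat with m by lia. rewrite Nat.add_comm, Nat.iter_add. apply fg_iter.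
Qed.

Lemma fg_ge i j : (j <= i)%nat -> Nat.iter i f (Nat.iter j g p) = Nat.iter (i - j) f p.
Proof.
  intros H. destruct (Nat.le_exists_sub j i H) as [m [-> _]].
  replace (m + j - j)%nat with m by lia. rewrite Nat.iter_add, fg_iter. auto.
Qed.

Lemma NB i j : i <> j -> ~ dS p (Nat.iter i f (Nat.iter j g p)) < r.
Proof.
  intros Hij.
  assert (Hp : dS p p < r) by (rewrite dS_refl; auto).
  destruct (Nat.le_gt_cases i j) as [H|H].
  - rewrite fg_le by lia. intros Hw.
    apply (Hwand (j - i) (Nat.iter (j - i) g p) ltac:(lia) Hw).
    rewrite fg_iter. auto.
  - rewrite fg_ge by lia. apply Hwand; auto. lia.
Qed.

Lemma NB_eq i : Nat.iter i f (Nat.iter i g p) = p.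
Proof. apply fg_iter. Qed.

Definition xs l := proj1_sig (Nat.iter l g p).

Lemma proj_xs l : proj (xs l) = Nat.iter l g p.
Proof. apply proj_sig. Qed.

Lemma xs_range l : 0 <= xs l < 1.
Proof. unfold xs. destruct (Nat.iter l g p); simpl; auto. Qed.

Lemma xs_neq i j : i <> j -> xs i <> xs j.
Proof.
  intros Hij E. apply (NB i j Hij).
  rewrite <- (proj_xs j), <- E, proj_xs, NB_eq, dS_refl. auto.
Qed.

Definition Yv i j := if Rlt_dec (xs i) (xs j) then xs j else xs j + 1.

Lemma Y_prop i j : i <> j -> xs i < Yv i j < xs i + 1 /\ proj (Yv i j) = proj (xs j).
Proof.
  intros Hij. pose proof (xs_neq i j Hij). pose proof (xs_range i). pose proof (xs_range j).
  unfold Yv. destruct Rlt_dec.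
  - split; auto. lra.
  - split; [lra| apply proj_plus1].
Qed.

Definition Sij i j := Arc (xs i) (Yv i j).

Notation iF k := (Nat.iter k F).

Lemma proj_iF_xs k j : proj (iF k (xs j)) = Nat.iter k f (Nat.iter j g p).
Proof. rewrite (proj_iter f F HF). rewrite proj_xs. auto. Qed.

Lemma proj_iF_Y k i j : i <> j -> proj (iF k (Yv i j)) = Nat.iter k f (Nat.iter j g p).
Proof. intros H. rewrite (proj_iter f F HF). rewrite (proj2 (Y_prop i j H)), proj_xs. auto. Qed.

Lemma arc_ok k i j : i <> j -> iF k (xs i) <= iF k (Yv i j) < iF k (xs i) + 1.
Proof.
  intros H. destruct (proj1 (Y_prop i j H)).
  split.
  - apply (iterF_monole f F HF); lra.
  - rewrite <- (iterF_plus1 f F HF). apply (iterF_mono f F HF); lra.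
Qed.

Lemma dR_far k i j : k <> j -> r <= dR (iF k (xs j)) (iF k (xs i)) ->
  True.
Proof. auto. Qed.

Lemma far_of k j q : k <> j -> proj q = Nat.iter k f (Nat.iter j g p) ->
  forall a, proj a = p -> r <= dR q a.
Proof.
  intros Hkj Hq a Ha. unfold dR. rewrite Hq, Ha, dS_sym.
  pose proof (NB k j Hkj). lra.
Qed.

Lemma sepW i j i' j' : i <> j -> i' <> j' -> (i, j) <> (i', j') ->
  exists k, (k = i \/ k = j) /\
    W (iF k (xs i)) (iF k (Yv i j)) (iF k (xs i')) (iF k (Yv i' j')) (r/2).
Proof.
  intros Hij Hij' Hne.
  destruct (Nat.eq_dec i i') as [<-|Hii].
  - assert (Hjj : j <> j') by (intros <-; auto).
    exists j. split; auto.
    assert (Hb : proj (iF j (Yv i j)) = p) by (rewrite proj_iF_Y; auto; apply NB_eq).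
    apply core_right; auto.
    + apply arc_ok; auto.
    + apply arc_ok; auto.
    + apply (far_of j i); auto. apply proj_iF_xs.
    + apply (far_of j j'); auto. apply proj_iF_Y; auto.
    + left. apply (far_of j i); auto. apply proj_iF_xs.
  - exists i. split; auto.
    assert (Ha : proj (iF i (xs i)) = p) by (rewrite proj_iF_xs; apply NB_eq).
    apply core_left; auto.
    + apply arc_ok; auto.
    + apply arc_ok; auto.
    + apply (far_of i j); auto. apply proj_iF_Y; auto.
    + apply (far_of i i'); auto. apply proj_iF_xs.
    + destruct (Nat.eq_dec j' i) as [->|Hj'].
      * right. rewrite Ha. rewrite proj_iF_Y; auto. apply NB_eq.
      * left. apply (far_of i j'); auto. apply proj_iF_Y; auto.
Qed.

Lemma dist_pairs n i j i' j' : i <> j -> i' <> j' -> (i, j) <> (i', j') ->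
  (i < n)%nat -> (j < n)%nat ->
  r/2 <= dyn_dist (Cmap f) dH n (Sij i j) (Sij i' j').
Proof.
  intros Hij Hij' Hne Hi Hj.
  destruct (sepW i j i' j' Hij Hij' Hne) as [k [Hk Hw]].
  eapply Rle_trans; [|apply (dyn_ge _ _ n _ _ k); destruct Hk; subst; auto].
  pose proof (arc_ok k i j Hij) as A1. pose proof (arc_ok k i' j' Hij') as A2.
  assert (L1 : forall z, Nat.iter k (Cmap f) (Sij i j) z <-> Arc (iF k (xs i)) (iF k (Yv i j)) z).
  { intros z. unfold Sij. apply (image_Arc f F HF). destruct (proj1 (Y_prop i j Hij)); lra. }
  assert (L2 : forall z, Nat.iter k (Cmap f) (Sij i' j') z <-> Arc (iF k (xs i')) (iF k (Yv i' j')) z).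
  { intros z. unfold Sij. apply (image_Arc f F HF). destruct (proj1 (Y_prop i' j' Hij')); lra. }
  assert (N1 : exists x, Nat.iter k (Cmap f) (Sij i j) x).
  { exists (proj (iF k (xs i))). apply L1. exists (iF k (xs i)). split; auto; lra. }
  assert (N2 : exists x, Nat.iter k (Cmap f) (Sij i' j') x).
  { exists (proj (iF k (xs i'))). apply L2. exists (iF k (xs i')). split; auto; lra. }
  destruct Hw as [z [[Hz Hfar]|[Hz Hfar]]].
  - apply (dH_ge_l _ _ _ (proj z) N1 N2).
    + apply L1. exists z; auto.
    + intros y Hy. apply L2 in Hy. destruct Hy as [s [Hs <-]]. apply Hfar; auto.
  - apply (dH_ge_r _ _ _ (proj z) N1 N2).
    + apply L2. exists z; auto.
    + intros y Hy. apply L1 in Hy. destruct Hy as [s [Hs <-]]. apply Hfar; auto.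
Qed.


Lemma dyn_self n (S : S1 -> Prop) e : 0 < e -> dyn_dist (Cmap f) dH n S S < e.
Proof.
  intros He. apply dyn_lt; auto. intros k _.
  apply Rle_lt_trans with (e / 2); [|lra].
  apply dH_le; [lra| |]; intros x Hx; exists x; split; auto; rewrite dS_refl; lra.
Qed.

Lemma pair_inj N a b : (0 < N)%nat ->
  (a / N, (N + a mod N))%nat = (b / N, (N + b mod N))%nat -> a = b.
Proof.
  intros HN E. injection E as E1 E2.
  rewrite (Nat.div_mod_eq a N), (Nat.div_mod_eq b N). rewrite E1. f_equal. lia.
Qed.

Lemma big_sep N eps : (1 <= N)%nat -> 0 < eps <= r / 2 ->
  INR (N * N) <= real (sep in_CS1 (Cmap f) dH (2 * N) eps).
Proof.
  intros HN He.
  set (L := map (fun q => Sij (q / N) (N + q mod N)) (seq 0 (N * N))).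
  assert (Hlen : length L = (N * N)%nat) by (unfold L; rewrite length_map, length_seq; auto).
  assert (Hq : forall q, In q (seq 0 (N * N)) ->
     (q / N < N)%nat /\ (N + q mod N < 2 * N)%nat /\ (q / N <> N + q mod N)%nat).
  { intros q Hq. apply in_seq in Hq.
    assert (q / N < N)%nat by (apply Nat.Div0.div_lt_upper_bound; lia).
    assert (q mod N < N)%nat by (apply Nat.mod_upper_bound; lia). lia. }
  assert (Hpd : forall a b, In a (seq 0 (N * N)) -> In b (seq 0 (N * N)) -> a <> b ->
     r / 2 <= dyn_dist (Cmap f) dH (2 * N) (Sij (a / N) (N + a mod N)) (Sij (b / N) (N + b mod N))).
  { intros a b Ha Hb Hab. destruct (Hq a Ha) as [A1 [A2 A3]]. destruct (Hq b Hb) as [B1 [B2 B3]].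
    apply dist_pairs; auto; try lia.
    intros E. apply Hab. apply (pair_inj N); auto; lia. }
  rewrite <- Hlen. apply sep_ge; [lra| exists (Arc 0 0); apply Arc_in; lra|].
  split; [|split].
  - unfold L. apply NoDup_map_NoDup_ForallPairs; [|apply seq_NoDup].
    intros a b Ha Hb E. apply NNPP. intros Hab.
    pose proof (Hpd a b Ha Hb Hab) as H. rewrite E in H.
    pose proof (dyn_self (2 * N) (Sij (b / N) (N + b mod N)) (r / 2) ltac:(lra)). lra.
  - intros x Hx. unfold L in Hx. apply in_map_iff in Hx. destruct Hx as [q [<- Hq']].
    destruct (Hq q Hq') as [_ [_ H3]]. unfold Sij. apply Arc_in.
    destruct (proj1 (Y_prop _ _ H3)). lra.
  - intros x y Hx Hy Hxy. unfold L in Hx, Hy.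
    apply in_map_iff in Hx. destruct Hx as [a [<- Ha]].
    apply in_map_iff in Hy. destruct Hy as [b [<- Hb]].
    assert (a <> b) by (intros ->; auto).
    pose proof (Hpd a b Ha Hb H). lra.
Qed.

Lemma phi_ge2 eps : 0 < eps <= r / 2 -> Rbar_le 2 (hpol_eps in_CS1 (Cmap f) dH eps).
Proof.
  intros He. unfold hpol_eps. apply limsup_ge2.
  intros e Hep N0. destruct (ln_bound e N0 Hep) as [N [HN0 [HN1 HK]]].
  exists (2 * N)%nat. split; [lia|].
  apply ratio_bound; auto. apply big_sep; auto.
Qed.

End Main.


Lemma Arc01_all2 (x : S1) : Arc 0 1 x.
Proof. exists (proj1_sig x). split; [destruct x; simpl; lra|apply proj_sig]. Qed.

Definition OArc (lo hi : R) : S1 -> Prop := fun x => exists s, lo < s < hi /\ proj s = x.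

Lemma dR_small x y : Rabs (x - y) <= 1/2 -> dR x y = Rabs (x - y).
Proof.
  intros H. destruct (Rle_lt_dec 0 (x - y)).
  - rewrite Rabs_pos_eq in * by lra. rewrite dR_val by lra.
    apply Rmin_left. lra.
  - rewrite Rabs_left in * by lra. rewrite dR_sym, dR_val by lra.
    rewrite Rmin_left; lra.
Qed.

Lemma lift_in (x : S1) (Q : R) : exists L, Q <= L < Q + 1 /\ proj L = x.
Proof.
  destruct (shift_exists (proj1_sig x) Q) as [k Hk].
  exists (proj1_sig x + IZR k). split; auto. rewrite proj_shift. apply proj_sig.
Qed.

Lemma proj_inj_close s s' : proj s = proj s' -> Rabs (s - s') < 1 -> s = s'.
Proof.
  intros H Hd. pose proof (dR_eq0 _ _ H) as E.
  destruct (Rle_lt_dec 0 (s - s')).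
  - rewrite Rabs_pos_eq in Hd by lra. rewrite dR_val in E by lra.
    unfold Rmin in E; destruct Rle_dec in E; lra.
  - rewrite Rabs_left in Hd by lra. rewrite dR_sym, dR_val in E by lra.
    unfold Rmin in E; destruct Rle_dec in E; lra.
Qed.

Lemma OArc_open lo hi : S1_open (OArc lo hi).
Proof.
  intros x [s [Hs <-]].
  set (rho := Rmin (Rmin (s - lo) (hi - s)) (1/2)).
  assert (Hr1 : rho <= s - lo) by (unfold rho; eapply Rle_trans; [apply Rmin_l| apply Rmin_l]).
  assert (Hr2 : rho <= hi - s) by (unfold rho; eapply Rle_trans; [apply Rmin_l| apply Rmin_r]).
  assert (Hr3 : rho <= 1/2) by (unfold rho; apply Rmin_r).
  assert (Hr0 : 0 < rho) by (unfold rho; repeat apply Rmin_glb_lt; lra).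
  exists rho. split; auto. intros y Hy. unfold Defs.ball in Hy.
  destruct (shift_exists (proj1_sig y) (s - 1/2)) as [k Hk].
  set (Y := proj1_sig y + IZR k) in *.
  assert (HY : proj Y = y) by (unfold Y; rewrite proj_shift; apply proj_sig).
  rewrite <- HY in Hy. fold (dR s Y) in Hy.
  rewrite dR_small in Hy by (apply Rabs_le; lra).
  exists Y. split; auto. apply Rabs_def2 in Hy. lra.
Qed.

Lemma sup_ex (T : R -> Prop) (B : R) :
  (exists t, T t) -> (forall t, T t -> t <= B) ->
  exists s, (forall t, T t -> t <= s) /\ (forall rho, 0 < rho -> exists t, T t /\ s - rho < t).
Proof.
  intros Hne Hb.
  destruct (completeness T) as [s [Hub Hl]].
  - exists B. intros t Ht. apply Hb; auto.
  - auto.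
  - exists s. split; [apply Hub|].
    intros rho Hrho. apply NNPP. intros Hn.
    assert (s <= s - rho); [|lra].
    apply Hl. intros t Ht. destruct (Rle_lt_dec t (s - rho)); auto.
    exfalso; apply Hn; exists t; auto.
Qed.

Lemma inf_ex (T : R -> Prop) (B : R) :
  (exists t, T t) -> (forall t, T t -> B <= t) ->
  exists s, (forall t, T t -> s <= t) /\ (forall rho, 0 < rho -> exists t, T t /\ t < s + rho).
Proof.
  intros [t0 Ht0] Hb.
  destruct (sup_ex (fun u => T (- u)) (- B)) as [s [H1 H2]].
  - exists (- t0). rewrite Ropp_involutive. auto.
  - intros u Hu. specialize (Hb _ Hu). lra.
  - exists (- s). split.
    + intros t Ht. assert (- t <= s) by (apply H1; rewrite Ropp_involutive; auto). lra.
    + intros rho Hrho. destruct (H2 rho Hrho) as [u [Hu Hu']]. exists (- u). split; auto. lra.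
Qed.

Lemma CS1_arc (A : S1 -> Prop) : in_CS1 A ->
  exists a b, a <= b <= a + 1 /\ forall z, A z <-> Arc a b z.
Proof.
  intros [[x0 Hx0] [Hcl Hco]].
  destruct (classic (forall z, A z)) as [All|NAll].
  { exists 0, 1. split; [lra|]. intros z; split; intros _; auto. apply Arc01_all2. }
  apply not_all_ex_not in NAll. destruct NAll as [q Hq].
  set (Q := proj1_sig q).
  assert (HQ : proj Q = q) by apply proj_sig.
  assert (HQ1 : proj (Q + 1) = q) by (rewrite proj_plus1; auto).
  set (T := fun t => Q < t < Q + 1 /\ A (proj t)).
  assert (Lift : forall x, A x -> exists L, T L /\ proj L = x).
  { intros x Hx. destruct (lift_in x Q) as [L [HL HLx]]. exists L. split; auto.
    split; [|rewrite HLx; auto]. split; [|lra].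
    destruct HL as [[HL|HL] _]; auto. exfalso. rewrite <- HL, HQ in HLx. subst x. contradiction. }
  destruct (Lift x0 Hx0) as [L0 [HT0 _]].
  destruct (inf_ex T Q) as [a [Ha1 Ha2]]; [exists L0; auto| intros t [[? ?] _]; lra|].
  destruct (sup_ex T (Q + 1)) as [b [Hb1 Hb2]]; [exists L0; auto| intros t [[? ?] _]; lra|].
  assert (HaQ : Q <= a).
  { destruct (Rle_lt_dec Q a); auto. destruct (Ha2 (Q - a) ltac:(lra)) as [t [[[? ?] _] ?]]. lra. }
  assert (HbQ : b <= Q + 1).
  { destruct (Rle_lt_dec b (Q + 1)); auto. destruct (Hb2 (b - (Q + 1)) ltac:(lra)) as [t [[[? ?] _] ?]]. lra. }
  assert (Hab : a <= b) by (pose proof (Ha1 L0 HT0); pose proof (Hb1 L0 HT0); lra).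
  assert (Aa : A (proj a)).
  { apply Hcl. intros rho Hrho. destruct (Ha2 rho Hrho) as [t [Ht Ht']].
    exists (proj t). split; [apply Ht|]. fold (dR a t).
    eapply Rle_lt_trans; [apply dR_le|]. pose proof (Ha1 t Ht). rewrite Rabs_left1; lra. }
  assert (Ab : A (proj b)).
  { apply Hcl. intros rho Hrho. destruct (Hb2 rho Hrho) as [t [Ht Ht']].
    exists (proj t). split; [apply Ht|]. fold (dR b t).
    eapply Rle_lt_trans; [apply dR_le|]. pose proof (Hb1 t Ht). rewrite Rabs_pos_eq; lra. }
  exists a, b. split; [lra|]. intros z. split.
  - intros Hz. destruct (Lift z Hz) as [L [HL <-]]. exists L. split; auto.
  - intros [t [Ht <-]].
    destruct (Req_dec t a) as [->|Hta]; auto.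
    destruct (Req_dec t b) as [->|Htb]; auto.
    apply NNPP. intros Hnt. apply Hco.
    exists (OArc Q t), (OArc t (Q + 1)).
    split; [apply OArc_open|]. split; [apply OArc_open|].
    split; [|split; [|split]].
    + intros x Hx. destruct (Lift x Hx) as [L [[HL _] <-]].
      destruct (Rlt_le_dec L t); [left; exists L; split; auto; lra|].
      destruct r as [r|r]; [right; exists L; split; auto; lra|].
      exfalso. rewrite <- r in Hx. contradiction.
    + destruct (Ha2 (t - a) ltac:(lra)) as [s [[Hs As] Hs']].
      exists (proj s). split; auto. exists s. split; auto. lra.
    + destruct (Hb2 (b - t) ltac:(lra)) as [s [[Hs As] Hs']].
      exists (proj s). split; auto. exists s. split; auto. lra.
    + intros x _ [s [Hs <-]] [s' [Hs' E]].
      assert (s' = s) by (apply proj_inj_close; auto; apply Rabs_def1; lra). lra.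
Qed.

Lemma Arc_shift a b k z : Arc (a + IZR k) (b + IZR k) z <-> Arc a b z.
Proof.
  split.
  - intros [s [Hs <-]]. exists (s - IZR k). split; [lra|].
    replace s with ((s - IZR k) + IZR k) at 2 by ring. rewrite proj_shift; auto.
  - intros [s [Hs <-]]. exists (s + IZR k). split; [lra|]. apply proj_shift.
Qed.

Lemma CS1_rep (A : S1 -> Prop) : in_CS1 A ->
  exists ab : R * R, 0 <= fst ab < 1 /\ fst ab <= snd ab <= fst ab + 1 /\ A = Arc (fst ab) (snd ab).
Proof.
  intros H. destruct (CS1_arc A H) as [a [b [Hab Heq]]].
  destruct (shift_exists a 0) as [k Hk].
  exists (a + IZR k, b + IZR k). simpl. split; [lra|split; [lra|]].
  apply functional_extensionality. intros z. apply propositional_extensionality.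
  rewrite Arc_shift. auto.
Qed.


Lemma Int_part_mono x y : x <= y -> (Int_part x <= Int_part y)%Z.
Proof.
  intros H. destruct (base_Int_part x), (base_Int_part y).
  destruct (Z_le_gt_dec (Int_part x) (Int_part y)); auto.
  assert (IZR (Int_part y + 1) <= IZR (Int_part x)) by (apply IZR_le; lia).
  rewrite plus_IZR in H4. lra.
Qed.

Lemma Int_part_shift x m : Int_part (x + IZR m) = (Int_part x + m)%Z.
Proof.
  destruct (base_Int_part x), (base_Int_part (x + IZR m)).
  apply (int_squeeze _ _ (x + IZR m)); rewrite ?plus_IZR; lra.
Qed.

Lemma Int_part_close x y : Int_part x = Int_part y -> Rabs (x - y) < 1.
Proof.
  intros H. destruct (base_Int_part x), (base_Int_part y). rewrite H in *.
  apply Rabs_def1; lra.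
Qed.

Lemma dH_arcs u v u' v' de : u <= v -> u' <= v' -> 0 < de ->
  Rabs (u - u') < de -> Rabs (v - v') < de -> dH (Arc u v) (Arc u' v') <= de.
Proof.
  intros H1 H2 Hde Hu Hv. apply Rabs_def2 in Hu. apply Rabs_def2 in Hv.
  apply dH_le; auto.
  - intros x [s [Hs <-]]. set (s' := Rmax u' (Rmin v' s)).
    exists (proj s'). split; [exists s'; split; auto; unfold s', Rmax, Rmin; repeat destruct Rle_dec; lra|].
    change (dR s s' < de). eapply Rle_lt_trans; [apply dR_le|].
    unfold s', Rmax, Rmin; repeat destruct Rle_dec; apply Rabs_def1; lra.
  - intros x [s [Hs <-]]. set (s' := Rmax u (Rmin v s)).
    exists (proj s'). split; [exists s'; split; auto; unfold s', Rmax, Rmin; repeat destruct Rle_dec; lra|].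
    change (dR s s' < de). eapply Rle_lt_trans; [apply dR_le|].
    unfold s', Rmax, Rmin; repeat destruct Rle_dec; apply Rabs_def1; lra.
Qed.

Definition rep (A : S1 -> Prop) : R * R :=
  match excluded_middle_informative (in_CS1 A) with
  | left H => proj1_sig (constructive_indefinite_description _ (CS1_rep A H))
  | right _ => (0, 0)
  end.

Lemma rep_spec A : in_CS1 A ->
  0 <= fst (rep A) < 1 /\ fst (rep A) <= snd (rep A) <= fst (rep A) + 1 /\
  A = Arc (fst (rep A)) (snd (rep A)).
Proof.
  intros H. unfold rep. destruct excluded_middle_informative; [|contradiction].
  destruct constructive_indefinite_description as [ab Hab]. simpl. auto.
Qed.

Section Upper.
Variable f : S1 -> S1.
Variable F : R -> R.
Hypothesis HF : is_increasing_lift f F.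
Variable M : nat.
Hypothesis HM : (0 < M)%nat.

Definition ck k t : Z := Int_part (INR M * Nat.iter k F t).

Fixpoint sumc (n : nat) (t : R) : Z :=
  match n with O => 0%Z | S n => (sumc n t + ck n t)%Z end.

Lemma ck_mono k t t' : t <= t' -> (ck k t <= ck k t')%Z.
Proof.
  intros H. apply Int_part_mono. apply Rmult_le_compat_l; [apply pos_INR|].
  apply (iterF_monole f F HF); auto.
Qed.

Lemma ck_range k t : 0 <= t <= 2 -> (ck k 0 <= ck k t <= ck k 0 + Z.of_nat (2 * M))%Z.
Proof.
  intros H. split; [apply ck_mono; lra|].
  replace (ck k 0 + Z.of_nat (2 * M))%Z with (ck k 2).
  - apply ck_mono; lra.
  - unfold ck. replace 2 with (0 + 1 + 1) by ring.
    rewrite !(iterF_plus1 f F HF).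
    rewrite <- Int_part_shift. f_equal. rewrite <- INR_IZR_INZ, mult_INR. simpl. ring.
Qed.

Lemma sumc_mono n t t' : t <= t' -> (sumc n t <= sumc n t')%Z.
Proof. intros H; induction n; simpl; [lia|]. pose proof (ck_mono n t t' H). lia. Qed.

Lemma sumc_range n t : 0 <= t <= 2 ->
  (sumc n 0 <= sumc n t <= sumc n 0 + Z.of_nat (n * (2 * M)))%Z.
Proof.
  intros H; induction n; simpl; [lia|]. pose proof (ck_range n t H). lia.
Qed.

Lemma sumc_eq_le n t t' : t <= t' -> sumc n t = sumc n t' ->
  forall k, (k < n)%nat -> ck k t = ck k t'.
Proof.
  intros H; induction n; simpl; intros E k Hk; [lia|].
  pose proof (sumc_mono n t t' H). pose proof (ck_mono n t t' H).
  destruct (Nat.eq_dec k n) as [->|Hkn]; [lia|]. apply IHn; [lia|lia].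
Qed.

Lemma sumc_eq n t t' : sumc n t = sumc n t' ->
  forall k, (k < n)%nat -> ck k t = ck k t'.
Proof.
  intros E k Hk. destruct (Rle_lt_dec t t').
  - apply (sumc_eq_le n); auto.
  - symmetry. apply (sumc_eq_le n); auto. lra.
Qed.

Lemma ck_close k t t' : ck k t = ck k t' ->
  Rabs (Nat.iter k F t - Nat.iter k F t') < / INR M.
Proof.
  intros E. apply Int_part_close in E.
  assert (HMp : 0 < INR M) by (apply lt_0_INR; lia).
  rewrite <- Rmult_minus_distr_l, Rabs_mult, Rabs_pos_eq in E by lra.
  apply (Rmult_lt_reg_l (INR M)); auto. rewrite Rinv_r; lra.
Qed.

Lemma image_Arc_eq k a b : a <= b ->
  Nat.iter k (Cmap f) (Arc a b) = Arc (Nat.iter k F a) (Nat.iter k F b).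
Proof.
  intros H. apply functional_extensionality. intros z. apply propositional_extensionality.
  apply (image_Arc f F HF). auto.
Qed.

Definition code n (A : S1 -> Prop) : nat * nat :=
  (Z.to_nat (sumc n (fst (rep A)) - sumc n 0), Z.to_nat (sumc n (snd (rep A)) - sumc n 0)).

Lemma sep_poly n eps E : / INR M < eps ->
  separated in_CS1 (Cmap f) dH n eps E ->
  (length E <= (2 * M * n + 1) * (2 * M * n + 1))%nat.
Proof.
  intros HMe [HND [HK Hsep]].
  assert (HMp : 0 < INR M) by (apply lt_0_INR; lia).
  rewrite <- (length_map (code n) E).
  rewrite <- (length_seq (2 * M * n + 1) 0) at 1 2.
  rewrite <- length_prod.
  apply NoDup_incl_length.
  - apply NoDup_map_NoDup_ForallPairs; auto.
    intros A A' HA HA' Hc. apply NNPP. intros Hne.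
    specialize (Hsep A A' HA HA' Hne).
    destruct (rep_spec A (HK A HA)) as [Ra [Rb Req]].
    destruct (rep_spec A' (HK A' HA')) as [Ra' [Rb' Req']].
    unfold code in Hc. injection Hc as Hc1 Hc2.
    pose proof (sumc_range n (fst (rep A)) ltac:(lra)).
    pose proof (sumc_range n (fst (rep A')) ltac:(lra)).
    pose proof (sumc_range n (snd (rep A)) ltac:(lra)).
    pose proof (sumc_range n (snd (rep A')) ltac:(lra)).
    assert (E1 : sumc n (fst (rep A)) = sumc n (fst (rep A'))) by lia.
    assert (E2 : sumc n (snd (rep A)) = sumc n (snd (rep A'))) by lia.
    assert (dyn_dist (Cmap f) dH n A A' < eps).
    { apply dyn_lt; [apply Rlt_trans with (/ INR M); auto; apply Rinv_0_lt_compat; auto|].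
      intros k Hk. rewrite Req, Req'.
      rewrite !image_Arc_eq by lra.
      eapply Rle_lt_trans; [|exact HMe].
      apply dH_arcs.
      - apply (iterF_monole f F HF); lra.
      - apply (iterF_monole f F HF); lra.
      - apply Rinv_0_lt_compat; auto.
      - apply ck_close. apply (sumc_eq n); auto.
      - apply ck_close. apply (sumc_eq n); auto. }
    lra.
  - intros c Hc. apply in_map_iff in Hc. destruct Hc as [A [<- HA]].
    destruct (rep_spec A (HK A HA)) as [Ra [Rb Req]].
    pose proof (sumc_range n (fst (rep A)) ltac:(lra)).
    pose proof (sumc_range n (snd (rep A)) ltac:(lra)).
    unfold code. apply in_prod; apply in_seq; lia.
Qed.

End Upper.


Lemma sep_le_bound (K : (S1 -> Prop) -> Prop) g n eps B :
  (forall E, separated K g dH n eps E -> INR (length E) <= B) ->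
  Rbar_le (sep K g dH n eps) B.
Proof.
  intros H. destruct (Lub_Rbar_correct (fun r => exists E, separated K g dH n eps E /\ r = INR (length E)))
    as [_ Hleast].
  apply Hleast. intros r [E [HE ->]]. simpl. apply H; auto.
Qed.

Lemma limsup_le2 (v : nat -> R) :
  (forall e, 0 < e -> exists N, forall n, (N <= n)%nat -> v n <= 2 + e) ->
  Rbar_le (LimSup_seq v) 2.
Proof.
  intros H. destruct (ex_LimSup_seq v) as [lv L].
  rewrite (is_LimSup_seq_unique v lv L).
  destruct lv as [l| |]; simpl in *; auto.
  - destruct (Rle_lt_dec l 2) as [Hl|Hl]; auto. exfalso.
    assert (Hp : 0 < (l - 2) / 2) by lra.
    destruct (L (mkposreal _ Hp)) as [L1 _]. simpl in L1.
    destruct (H _ Hp) as [N HN].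
    destruct (L1 N) as [n [Hn Hv]]. specialize (HN n Hn). lra.
  - destruct (H (1/2) ltac:(lra)) as [N HN].
    destruct (L 3 N) as [n [Hn Hv]]. specialize (HN n Hn). lra.
Qed.

Lemma ratio_upper (e s : R) (M n : nat) : 0 < e -> (1 <= M)%nat -> (2 <= n)%nat ->
  1 <= s -> s <= INR ((2 * M * n + 1) * (2 * M * n + 1)) ->
  2 * ln (3 * INR M) / e <= ln (INR n) ->
  ln s / ln (INR n) <= 2 + e.
Proof.
  intros He HM Hn Hs1 Hs2 HK.
  assert (HMr : 1 <= INR M) by (apply (le_INR 1); auto).
  assert (Hnr : 2 <= INR n) by (apply (le_INR 2); auto).
  assert (Hl2 : 0 < ln 2) by (pose proof ln_lt_2; lra).
  assert (Hln : ln 2 <= ln (INR n)) by (apply ln_le; lra).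
  assert (HlM : 0 <= ln (3 * INR M)) by (rewrite <- ln_1; apply ln_le; lra).
  set (x := 2 * INR M * INR n + 1).
  assert (Hx : INR ((2 * M * n + 1) * (2 * M * n + 1)) = x * x).
  { unfold x. rewrite mult_INR, plus_INR, !mult_INR. simpl. ring. }
  rewrite Hx in Hs2.
  assert (Hx3 : x <= 3 * INR M * INR n) by (unfold x; nra).
  assert (Hxp : 1 <= x) by (unfold x; nra).
  assert (A : ln s <= 2 * (ln (3 * INR M) + ln (INR n))).
  { apply Rle_trans with (ln (x * x)); [apply ln_le; lra|].
    rewrite ln_mult by lra.
    assert (ln (3 * INR M * INR n) = ln (3 * INR M) + ln (INR n)) by (apply ln_mult; lra).
    assert (ln x <= ln (3 * INR M * INR n)) by (apply ln_le; lra). lra. }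
  assert (B : 2 * ln (3 * INR M) <= e * ln (INR n)).
  { unfold Rdiv in HK. apply (Rmult_le_compat_l e) in HK; [|lra].
    rewrite <- Rmult_assoc, (Rmult_comm e), Rmult_assoc, Rinv_r, Rmult_1_r in HK; lra. }
  apply (Rmult_le_reg_r (ln (INR n))); [lra|].
  unfold Rdiv. rewrite Rmult_assoc, Rinv_l, Rmult_1_r by lra.
  nra.
Qed.

Lemma phi_le2 (f : S1 -> S1) (F : R -> R) (HF : is_increasing_lift f F) eps :
  0 < eps -> Rbar_le (hpol_eps in_CS1 (Cmap f) dH eps) 2.
Proof.
  intros He. destruct (small_inv (eps / 2) ltac:(lra)) as [m Hm].
  set (M := S m).
  assert (HM : (0 < M)%nat) by (unfold M; lia).
  assert (HMe : / INR M < eps) by (unfold M; lra).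
  assert (HK : exists x0, in_CS1 x0) by (exists (Arc 0 0); apply Arc_in; lra).
  unfold hpol_eps. apply limsup_le2. intros e Hep.
  destruct (ln_bound (e) 2 Hep) as [_ _].
  assert (Hexp : 0 <= exp (2 * ln (3 * INR M) / e)) by (left; apply exp_pos).
  destruct (nfloor_ex _ Hexp) as [N HN].
  exists (Nat.max 2 (S N)). intros n Hn.
  destruct (sep_fin in_CS1 (Cmap f) n eps He HK) as [s [Hs [Hs1 _]]].
  assert (Hsb : s <= INR ((2 * M * n + 1) * (2 * M * n + 1))).
  { pose proof (sep_le_bound in_CS1 (Cmap f) n eps (INR ((2 * M * n + 1) * (2 * M * n + 1)))) as H.
    rewrite Hs in H. apply H. intros E HE. apply le_INR. apply (sep_poly f F HF M HM n eps E); auto. }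
  rewrite Hs. simpl. apply (ratio_upper e s M n); auto; try lia.
  rewrite <- (ln_exp (2 * ln (3 * INR M) / e)) at 1. apply ln_le; [apply exp_pos|].
  apply Rle_trans with (INR (S N)); [rewrite S_INR; lra| apply le_INR; lia].
Qed.

Theorem corollary1 (f : S1 -> S1) :
  orientation_preserving_homeo f ->
  irrational_rotation_number f ->
  homeomorphic_to_Cantor (NW f) ->
  exists h : Rbar, is_hpol in_CS1 (Cmap f) dH h /\ Rbar_le 2 h.
Proof.
  intros [[_ [g [_ [Hgf Hfg]]]] [F HF]] _ HC.
  destruct (exists_wandering f HC) as [p [U [[r [Hr Hball]] Hw]]].
  assert (Hwand : forall n y, (1 <= n)%nat -> dS p y < r -> ~ dS p (Nat.iter n f y) < r).
  { intros n y Hn Hy H. apply (Hw n Hn y (Hball y Hy) (Hball _ H)). }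
  exists (Finite 2). split; [|simpl; lra].
  intros e He. exists (r / 2). split; [lra|]. intros eps Heps.
  assert (E : hpol_eps in_CS1 (Cmap f) dH eps = Finite 2).
  { apply Rbar_le_antisym.
    - apply (phi_le2 f F HF); lra.
    - apply (phi_ge2 f g Hfg F HF p r Hr Hwand); lra. }
  rewrite E. simpl. lra.
Qed.
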